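(* Consider two CDNs with performance parameters $0\le\beta_1<\beta_2<1$ and prices $w_1,w_2\ge0$ such that each CDN attracts a set of content providers of positive measure (model in the context). Then there exist $\theta_1,\theta_2$ such that for a content provider with sensitivity $\theta\in[0,1]$: if $0\le\theta\le\theta_2$ then $0\ge U(\theta,2)$ and $0\ge U(\theta,1)$ (choosing no CDN is best); if $\theta_2\le\theta\le\theta_1$ then $U(\theta,2)\ge U(\theta,1)$ and $U(\theta,2)\ge0$ (choosing $CDN_2$ is best); if $\theta_1\le\theta\le1$ then $U(\theta,1)\ge U(\theta,2)$ and $U(\theta,1)\ge0$ (choosing $CDN_1$ is best).
   Context: Each $CDN_k$ ($k=1,2$) has a fixed performance parameter $\beta_k\in[0,1)$ and price $w_k\ge0$. There is a continuum of content providers of total mass $\Lambda>0$ with sensitivity parameters $\theta$ uniformly distributed on $[0,1]$. A content provider with sensitivity $\theta$ hiring $CDN_k$ gets payoff $U(\theta,k)=\theta(1-\beta_k)-w_k$; hiring none gives $0$. Each content provider hires at most one CDN, choosing an option of maximum payoff. *)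

(* Defs.v *)
From HB Require Import structures.
From mathcomp Require Import all_boot all_order all_algebra.
From mathcomp Require Import all_classical all_reals.
From mathcomp Require Import ereal topology normedtype measure lebesgue_measure.
Set Implicit Arguments. Unset Strict Implicit. Unset Printing Implicit Defensive.
Import Order.TTheory GRing.Theory Num.Theory.
Local Open Scope classical_set_scope.
Local Open Scope ring_scope.

Definition payoff (R : realType) (beta w theta : R) : R :=
  theta * (1 - beta) - w.

Definition attracted (R : realType) (beta w beta' w' : R) : set R :=
  [set theta | 0 <= theta <= 1 /\
     payoff beta' w' theta < payoff beta w theta /\ 0 < payoff beta w theta].

(* Mass of content providers attracted: total mass Lambda times the
   (uniform) Lebesgue measure of the attracted set of sensitivities. *)
Definition attracted_mass (R : realType) (Lambda beta w beta' w' : R)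
  : \bar R :=
  (Lambda%:E * (@lebesgue_measure R) (attracted beta w beta' w'))%E.

(* Main.v *)
Require Import Defs.
From HB Require Import structures.
From mathcomp Require Import all_boot all_order all_algebra.
From mathcomp Require Import all_classical all_reals.
From mathcomp Require Import ereal topology normedtype measure lebesgue_measure.
From mathcomp Require Import lra.
Import Order.TTheory GRing.Theory Num.Theory.
Local Open Scope ring_scope.

Lemma nonempty_att (R : realType) (Lambda b w b' w' : R) :
  (0 < attracted_mass Lambda b w b' w')%E ->
  exists t, attracted b w b' w' t.
Proof.
move=> H; case: (pselect (exists t, attracted b w b' w' t)) => // hn.
have E : attracted b w b' w' = set0.
  by apply/seteqP; split => t //= ht; apply: hn; exists t.
by move: H; rewrite /attracted_mass E measure0 mule0 ltxx.
Qed.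

Theorem lemma2 (R : realType) (Lambda beta1 beta2 w1 w2 : R) :
  0 < Lambda ->
  0 <= beta1 -> beta1 < beta2 -> beta2 < 1 ->
  0 <= w1 -> 0 <= w2 ->
  (0 < attracted_mass Lambda beta1 w1 beta2 w2)%E ->
  (0 < attracted_mass Lambda beta2 w2 beta1 w1)%E ->
  exists theta1 theta2 : R,
    forall theta : R, 0 <= theta <= 1 ->
      (0 <= theta <= theta2 ->
         payoff beta2 w2 theta <= 0 /\ payoff beta1 w1 theta <= 0) /\
      (theta2 <= theta <= theta1 ->
         payoff beta1 w1 theta <= payoff beta2 w2 theta /\
         0 <= payoff beta2 w2 theta) /\
      (theta1 <= theta <= 1 ->
         payoff beta2 w2 theta <= payoff beta1 w1 theta /\
         0 <= payoff beta1 w1 theta).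
Proof.
move=> _ hb1 h12 hb2 hw1 hw2 _ /nonempty_att [t0 [_ [ht1 ht2]]].
move: ht1 ht2; rewrite /payoff => ht1 ht2.
have a1p : 0 < 1 - beta1 by lra.
have a2p : 0 < 1 - beta2 by lra.
have dp : 0 < beta2 - beta1 by lra.
have key : w2 * (1 - beta1) <= w1 * (1 - beta2).
  rewrite leNgt; apply/negP => hc.
  have h1 : 0 < (beta2 - beta1) * (t0 * (1 - beta2) - w2) by apply: mulr_gt0.
  have h2 : 0 < (1 - beta2) * ((t0 * (1 - beta2) - w2) - (t0 * (1 - beta1) - w1)).
    by apply: mulr_gt0 => //; lra.
  lra.
exists ((w1 - w2) / (beta2 - beta1)), (w2 / (1 - beta2)) => th /andP[th0 th1].
rewrite /payoff.
split; [|split].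
- move=> /andP[_ h]; move: h; rewrite ler_pdivlMr // => h; split; first lra.
  have h3 := ler_wpM2l (ltW a1p) h.
  suff : (1 - beta2) * (th * (1 - beta1) - w1) <= 0.
    by rewrite pmulr_rle0.
  lra.
- move=> /andP[h h']; move: h h'; rewrite ler_pdivlMr // ler_pdivrMr // => h h'.
  split; lra.
- move=> /andP[h _]; move: h; rewrite ler_pdivrMr // => h; split; first lra.
  have h3 := ler_wpM2l (ltW a1p) h.
  suff : 0 <= (beta2 - beta1) * (th * (1 - beta1) - w1).
    by rewrite pmulr_rge0.
  lra.
Qed.
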